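(* Let $\mathcal{X}$ and $\mathcal{Y}$ be discrete (finite or countable) alphabets. Let $\{p_\theta\}_{\theta\in\Theta}$ be a nonempty family of probability distributions on $\mathcal{X}$ (the uncertain distributions of $X$) and let $\{\boldsymbol{P}_\lambda\}_{\lambda\in\Lambda}$ be a nonempty family of transition probability matrices $\boldsymbol{P}_\lambda=(p_\lambda(y|x))_{x\in\mathcal X,y\in\mathcal Y}$ (the uncertain transition probability matrices of $Y$ given $X$). Then $$\hat H(X,Y)\le \hat H(X)+\hat H(Y|X).$$ Moreover, equality holds when $\Theta$ and $\Lambda$ are singletons (i.e. the distribution of $X$ and the transition matrix of $Y$ given $X$are deterministic), and if $\hat H(Y|X)=0$ then $\hat H(X,Y)=\hat H(X)$.
   Context: Convention: $0\log\frac10=0$; all quantities take values in $[0,\infty]$. The nonlinear quantities are defined by $\hat H(X)=\sup_{\theta\in\Theta}\sum_x p_\theta(x)\log\frac{1}{p_\theta(x)}$; $\hat H(X,Y)=\sup_{\theta\in\Theta}\sup_{\lambda\in\Lambda}\sum_{x,y}p_\theta(x)p_\lambda(y|x)\log\frac{1}{p_\theta(x)p_\lambda(y|x)}$; $\hat H(Y|X=x)=\sup_{\lambda\in\Lambda}\sum_y p_\lambda(y|x)\log\frac{1}{p_\lambda(y|x)}$; $\hat H(Y|X)=\sup_{\theta\in\Theta}\sum_x p_\theta(x)\hat H(Y|X=x)$. *)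

(* Defs.v *)
From mathcomp Require Import all_boot all_order all_algebra.
From mathcomp Require Import all_classical all_reals.
From mathcomp Require Import ereal esum exp.
Set Implicit Arguments. Unset Strict Implicit. Unset Printing Implicit Defensive.
Import Order.TTheory GRing.Theory Num.Theory.
Local Open Scope classical_set_scope.
Local Open Scope ring_scope.
Local Open Scope ereal_scope.

(* entropy summand  q log(1/q), with the convention 0 log(1/0) = 0 (natural log) *)
Definition entr (R : realType) (q : R) : R :=
  if q == 0%R then 0%R else (q * ln (q^-1))%R.

Definition is_distr (R : realType) (X : countType) (p : X -> R) : Prop :=
  (forall x, (0 <= p x)%R) /\ \esum_(x in setT) (p x)%:E = 1.

Definition is_trans (R : realType) (X Y : countType) (P : X -> Y -> R) : Prop :=
  forall x, is_distr (P x).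

Definition HX (R : realType) (Theta : Type) (X : countType)
  (p : Theta -> X -> R) : \bar R :=
  ereal_sup [set \esum_(x in setT) (entr (p t x))%:E | t in [set: Theta]].

Definition HXY (R : realType) (Theta Lambda : Type) (X Y : countType)
  (p : Theta -> X -> R) (P : Lambda -> X -> Y -> R) : \bar R :=
  ereal_sup [set ereal_sup
    [set \esum_(xy in setT) (entr (p t xy.1 * P l xy.1 xy.2)%R)%:E
      | l in [set: Lambda]] | t in [set: Theta]].

Definition HYgivenx (R : realType) (Lambda : Type) (X Y : countType)
  (P : Lambda -> X -> Y -> R) (x : X) : \bar R :=
  ereal_sup [set \esum_(y in setT) (entr (P l x y))%:E | l in [set: Lambda]].

Definition HYgivenX (R : realType) (Theta Lambda : Type) (X Y : countType)
  (p : Theta -> X -> R) (P : Lambda -> X -> Y -> R) : \bar R :=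
  ereal_sup [set \esum_(x in setT) ((p t x)%:E * HYgivenx P x)
    | t in [set: Theta]].

(* Main.v *)
Require Import Defs.
From mathcomp Require Import all_boot all_order all_algebra.
From mathcomp Require Import all_classical all_reals.
From mathcomp Require Import ereal esum exp.
From mathcomp Require Import ring lra.
Import Order.TTheory GRing.Theory Num.Theory.
Local Open Scope classical_set_scope.
Local Open Scope ring_scope.
Local Open Scope ereal_scope.

Lemma esumZl (R : realType) (T : choiceType) (I : set T) (a : T -> \bar R) (c : R) :
  (0 <= c)%R -> (forall i, 0 <= a i) ->
  \esum_(i in I) (c%:E * a i) = c%:E * \esum_(i in I) a i.
Proof.
move=> c0 a0; rewrite /esum -ereal_supZl//; last first.
  by apply/set0P; exists (\sum_(x \in set0) a x); exists set0 => //; exact: fsets_set0.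
rewrite image_comp; congr ereal_sup; apply: eq_imagel => A [finA _] /=.
by rewrite !fsbig_finite// ge0_sume_distrr.
Qed.

Lemma entrM (R : realType) (a b : R) : (0 <= a)%R -> (0 <= b)%R ->
  entr (a * b) = (b * entr a + a * entr b)%R.
Proof.
rewrite /entr => a0 b0.
have [->|an0] := eqVneq a 0%R; first by rewrite !mul0r eqxx !mulr0 addr0.
have [->|bn0] := eqVneq b 0%R; first by rewrite !mulr0 eqxx !mul0r addr0.
rewrite mulf_eq0 (negPf an0) (negPf bn0) /= invfM lnM ?posrE ?invr_gt0 ?lt0r ?an0 ?bn0 //.
ring.
Qed.

Lemma entr_ge0 (R : realType) (q : R) : (0 <= q)%R -> (q <= 1)%R -> (0 <= entr q)%R.
Proof.
rewrite /entr => q0 q1; case: eqP => // qn0.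
have qp : (0 < q)%R by rewrite lt0r q0 andbT; apply/eqP.
by rewrite mulr_ge0// ln_ge0// invf_ge1.
Qed.

Lemma distr_le1 (R : realType) (X : countType) (p : X -> R) x : is_distr p -> (p x <= 1)%R.
Proof.
move=> [p0 p1]; rewrite -lee_fin -p1; apply: esum_ge; exists [set x].
  by split => //; exact: finite_set1.
by rewrite fsbig_set1.
Qed.

Lemma setTX (A B : Type) : [set: A] `*`` (fun _ => [set: B]) = [set: A * B].
Proof. by apply/seteqP; split => // -[]. Qed.

Lemma chain (R : realType) (X Y : countType) (q : X -> R) (Q : X -> Y -> R) :
  is_distr q -> is_trans Q ->
  \esum_(xy in [set: X * Y]) (entr (q xy.1 * Q xy.1 xy.2))%:E =
  \esum_(x in [set: X]) (entr (q x))%:E +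
  \esum_(x in [set: X]) ((q x)%:E * \esum_(y in [set: Y]) (entr (Q x y))%:E).
Proof.
move=> hq hQ.
have q0 x : (0 <= q x)%R by case: hq.
have Q0 x y : (0 <= Q x y)%R by case: (hQ x).
have eq0 x : (0 <= entr (q x))%R by apply: entr_ge0 => //; exact: distr_le1.
have eQ0 x y : (0 <= entr (Q x y))%R by apply: entr_ge0 => //; exact: distr_le1.
rewrite -setTX -(esum_esum (a := fun x y => (entr (q x * Q x y))%:E)); last first.
  move=> i j _ _; rewrite lee_fin entr_ge0 ?mulr_ge0 ?mulr_ile1 //; exact: distr_le1.
simpl.
rewrite -esumD; last first.
- by move=> x _; rewrite mule_ge0// ?lee_fin// esum_ge0// => y _; rewrite lee_fin.
- by move=> x _; rewrite lee_fin.
apply: eq_esum => x _.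
under eq_esum do rewrite entrM// EFinD EFinM EFinM.
rewrite esumD; last by move=> y _; rewrite mule_ge0 ?lee_fin.
  2: by move=> y _; rewrite mule_ge0 ?lee_fin.
under eq_esum do rewrite muleC.
rewrite esumZl// ?esumZl//; last by move=> y; rewrite lee_fin.
  by case: (hQ x) => _ ->; rewrite mule1.
by move=> y; rewrite lee_fin.
Qed.

Lemma sup_single (R : realType) (T : Type) (f : T -> \bar R) t0 :
  (forall t, t = t0) -> ereal_sup [set f t | t in [set: T]] = f t0.
Proof.
move=> h; rewrite (_ : [set f t | t in [set: T]] = [set f t0]) ?ereal_sup1//.
by apply/seteqP; split => [_ [t _ <-]|_ ->]; [rewrite (h t)|exists t0].
Qed.

Arguments sup_single {R T} f {t0}.

Theorem theorem4 (R : realType) (X Y : countType) (Theta Lambda : Type)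
  (p : Theta -> X -> R) (P : Lambda -> X -> Y -> R)
  (hTheta : inhabited Theta) (hLambda : inhabited Lambda)
  (hp : forall t, is_distr (p t)) (hP : forall l, is_trans (P l)) :
  [/\ HXY p P <= HX p + HYgivenX p P,
      ((exists t0 : Theta, forall t, t = t0) ->
       (exists l0 : Lambda, forall l, l = l0) ->
       HXY p P = HX p + HYgivenX p P)
    & (HYgivenX p P = 0 -> HXY p P = HX p)].
Proof.
have p0 t x : (0 <= p t x)%R by case: (hp t).
have P0 l x y : (0 <= P l x y)%R by case: (hP l x).
have ep0 t x : (0 <= entr (p t x))%R by apply: entr_ge0 => //; exact: distr_le1 (hp t).
have eP0 l x y : (0 <= entr (P l x y))%R by apply: entr_ge0 => //; exact: distr_le1 (hP l x).
have Hl0 l x : 0 <= \esum_(y in [set: Y]) (entr (P l x y))%:E.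
  by apply: esum_ge0 => y _; rewrite lee_fin.
have G0 x : 0 <= HYgivenx P x.
  case: hLambda => l; apply: le_trans (Hl0 l x) _; rewrite /HYgivenx; apply: ereal_sup_ubound; by exists l.
have HlG l x : \esum_(y in [set: Y]) (entr (P l x y))%:E <= HYgivenx P x.
  by apply: ereal_sup_ubound; exists l.
have Ht0 t : 0 <= \esum_(x in [set: X]) (entr (p t x))%:E.
  by apply: esum_ge0 => y _; rewrite lee_fin.
have HtX t : \esum_(x in [set: X]) (entr (p t x))%:E <= HX p.
  by apply: ereal_sup_ubound; exists t.
have S0 t l : 0 <= \esum_(x in [set: X]) ((p t x)%:E * \esum_(y in [set: Y]) (entr (P l x y))%:E).
  by apply: esum_ge0 => x _; rewrite mule_ge0 ?lee_fin.
have HXYge t l : \esum_(xy in [set: X * Y]) (entr (p t xy.1 * P l xy.1 xy.2))%:E <= HXY p P.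
  apply: le_trans (_ : ereal_sup [set \esum_(xy in [set: X * Y]) (entr (p t xy.1 * P l xy.1 xy.2))%:E | l in [set: Lambda]] <= _).
    by apply: ereal_sup_ubound; exists l.
  by apply: ereal_sup_ubound; exists t.
have part1 : HXY p P <= HX p + HYgivenX p P.
  apply: ge_ereal_sup => _ [t _ <-]; apply: ge_ereal_sup => _ [l _ <-].
  rewrite chain//; apply: leeD => //.
  apply: le_trans (_ : \esum_(x in [set: X]) ((p t x)%:E * HYgivenx P x) <= _).
    by apply: le_esum => x _; apply: lee_wpmul2l; rewrite ?lee_fin.
  by apply: ereal_sup_ubound; exists t.
have part3 : HX p <= HXY p P.
  apply: ge_ereal_sup => _ [t _ <-]; case: hLambda => l.
  apply: le_trans (HXYge t l); rewrite chain//; exact: leeDl.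
split => //.
  move=> [t0 ht] [l0 hl].
  rewrite /HXY /HX /HYgivenX !(sup_single _ ht) (sup_single _ hl) chain//; congr (_ + _).
  by apply: eq_esum => x _; rewrite /HYgivenx (sup_single _ hl).
move=> h0; apply/le_anti; rewrite part3 andbT; by rewrite h0 adde0 in part1.
Qed.
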